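(* Let the parameters satisfy $\alpha\in(0,1]$, $\alpha_1,\alpha_2\in(0,2]$ and either (B1) $\alpha_1,\alpha_2\in(0,2)$, or (B2) $\alpha\in(0,1)$ with $\alpha_1\neq 2$ or $\alpha_2\neq 2$. Let $\mathcal{M},\mathcal{N}\subset\mathbb{R}^n$ be two manifolds that are $\mathcal{C}^k$-smooth ($k\geq 2$) around a point $\bar{x}\in\mathcal{M}\cap\mathcal{N}$, such that $\mathcal{M}\cap\mathcal{N}$ is a $\mathcal{C}^k$-smooth manifold around $\bar{x}$ and $\mathrm{T}_{\mathcal{M}\cap\mathcal{N}}(\bar{x})=\mathrm{T}_{\mathcal{M}}(\bar{x})\cap\mathrm{T}_{\mathcal{N}}(\bar{x})$. Then \[ \sigma(S_{\mathrm{T}(\bar{x})})\coloneqq\|S_{\mathrm{T}(\bar{x})}-\Pi_{\mathrm{T}_{\mathcal{M}}(\bar{x})\cap\mathrm{T}_{\mathcal{N}}(\bar{x})}\|<1, \] where $S_{\mathrm{T}(\bar{x})}=\alpha\,\Pi^{\alpha_2}_{\mathrm{T}_{\mathcal{M}}(\bar{x})}\Pi^{\alpha_1}_{\mathrm{T}_{\mathcal{N}}(\bar{x})}+(1-\alpha)I$.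
   Context: For a closed nonempty set $C$, $\Pi_C$ is the projection and $\Pi_C^{\alpha}\coloneqq(1-\alpha)I+\alpha\Pi_C$ is the relaxed projection; $\|\cdot\|$ is the operator norm. The tangent space of a manifold $\mathcal{M}$ locally defined by $\{x:F(x)=0\}$ ($F$ of class $\mathcal{C}^k$ with surjective derivative) is $\mathrm{T}_{\mathcal{M}}(x)=\ker \mathrm{J}F(x)$. *)

(* Defs.v *)
From HB Require Import structures.
From mathcomp Require Import all_boot all_order all_algebra.
From mathcomp Require Import all_classical all_reals all_analysis.
Set Implicit Arguments. Unset Strict Implicit. Unset Printing Implicit Defensive.
Import Order.TTheory GRing.Theory Num.Theory.
Import numFieldNormedType.Exports.
Local Open Scope classical_set_scope.
Local Open Scope ring_scope.

Definition enorm (R : realType) (n : nat) (v : 'rV[R]_n) : R :=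
  Num.sqrt (\sum_(i < n) v ord0 i ^+ 2).

(* C^k on a set U: k-fold differentiability with continuous k-th derivative;
   the derivative is represented by its (flattened) Jacobian matrix. *)
Fixpoint Ck (R : realType) (n : nat) (k : nat) (U : set 'rV[R]_n)
    (m : nat) (f : 'rV[R]_n -> 'rV[R]_m) {struct k} : Prop :=
  match k with
  | 0 => forall x, U x -> {for x, continuous f}
  | k'.+1 => (forall x, U x -> differentiable f x) /\
             Ck k' U (fun x => mxvec ('J f x))
  end.

Definition local_eq (R : realType) (n k : nat) (M : set 'rV[R]_n)
    (x : 'rV[R]_n) (U : set 'rV[R]_n) (m : nat) (F : 'rV[R]_n -> 'rV[R]_m) :
    Prop :=
  [/\ open U, U x, Ck k U F,
      (forall y, U y -> forall w : 'rV[R]_m, exists v, 'd F y v = w) &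
      (forall y, U y -> (M y <-> F y = 0))].

(* T is the tangent space T_M(x) = ker JF(x) of the C^k manifold M around x,
   for some local defining function F. *)
Definition tangent_at (R : realType) (n k : nat) (M : set 'rV[R]_n)
    (x : 'rV[R]_n) (T : set 'rV[R]_n) : Prop :=
  exists (U : set 'rV[R]_n) (m : nat) (F : 'rV[R]_n -> 'rV[R]_m),
    local_eq k M x U F /\ T = [set v | 'd F x v = 0].

Definition is_proj (R : realType) (n : nat) (C : set 'rV[R]_n)
    (P : 'rV[R]_n -> 'rV[R]_n) : Prop :=
  forall x, C (P x) /\ forall y, C y -> enorm (x - P x) <= enorm (x - y).

Definition relax (R : realType) (n : nat) (a : R) (P : 'rV[R]_n -> 'rV[R]_n)
    (x : 'rV[R]_n) : 'rV[R]_n := (1 - a) *: x + a *: P x.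

Definition opnorm (R : realType) (n : nat) (A : 'rV[R]_n -> 'rV[R]_n) : R :=
  sup [set enorm (A v) | v in [set v : 'rV[R]_n | enorm v <= 1]].

(* Main.v *)
Require Import Defs.
From HB Require Import structures.
From mathcomp Require Import all_boot all_order all_algebra.
From mathcomp Require Import all_classical all_reals all_analysis.
From mathcomp Require Import ring lra.
Import Order.TTheory GRing.Theory Num.Theory.
Import numFieldNormedType.Exports.
Local Open Scope classical_set_scope.
Local Open Scope ring_scope.
Set Implicit Arguments. Unset Strict Implicit. Unset Printing Implicit Defensive.

Section Dot.
Variables (R : realType) (n : nat).
Implicit Types (u v w : 'rV[R]_n).

Definition dot u v : R := \sum_(i < n) u ord0 i * v ord0 i.

Lemma dotC u v : dot u v = dot v u.
Proof. by apply: eq_bigr => i _; rewrite mulrC. Qed.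

Lemma dotDl u v w : dot (u + v) w = dot u w + dot v w.
Proof. by rewrite /dot -big_split; apply: eq_bigr => i _; rewrite mxE mulrDl. Qed.

Lemma dotZl a u v : dot (a *: u) v = a * dot u v.
Proof. by rewrite /dot mulr_sumr; apply: eq_bigr => i _; rewrite mxE mulrA. Qed.

Lemma dotNl u v : dot (- u) v = - dot u v.
Proof. by rewrite /dot -sumrN; apply: eq_bigr => i _; rewrite mxE mulNr. Qed.

Lemma dotBl u v w : dot (u - v) w = dot u w - dot v w.
Proof. by rewrite dotDl dotNl. Qed.

Lemma dotDr u v w : dot w (u + v) = dot w u + dot w v.
Proof. by rewrite dotC dotDl ![dot _ w]dotC. Qed.

Lemma dotZr a u v : dot v (a *: u) = a * dot v u.
Proof. by rewrite dotC dotZl dotC. Qed.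

Lemma dotNr u v : dot v (- u) = - dot v u.
Proof. by rewrite dotC dotNl dotC. Qed.

Lemma dotBr u v w : dot w (u - v) = dot w u - dot w v.
Proof. by rewrite dotDr dotNr. Qed.

Lemma dot0l v : dot 0 v = 0.
Proof. by rewrite /dot big1 // => i _; rewrite mxE mul0r. Qed.

Lemma dot0r v : dot v 0 = 0.
Proof. by rewrite dotC dot0l. Qed.

Lemma dot_ge0 v : 0 <= dot v v.
Proof. by apply: sumr_ge0 => i _; exact: mulr_ge0_le0 || rewrite -expr2 sqr_ge0. Qed.

Lemma dot_eq0 v : dot v v = 0 -> v = 0.
Proof.
move=> H; apply/rowP => j; rewrite mxE.
have H0 : forall i, xpredT i -> 0 <= v ord0 i * v ord0 i.
  by move=> i _; rewrite -expr2 sqr_ge0.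
have := @psumr_eq0P R _ xpredT (fun i => v ord0 i * v ord0 i) H0 H j isT.
by move/eqP; rewrite mulf_eq0 orbb => /eqP; rewrite [in X in X -> _](ord1 (0 : 'I_1)).
Qed.

Lemma enormE v : enorm v = Num.sqrt (dot v v).
Proof. by rewrite /enorm /dot; congr Num.sqrt; apply: eq_bigr => i _; rewrite expr2. Qed.

End Dot.
Section Proj.
Variables (R : realType) (n : nat).
Implicit Types (u v w x y z : 'rV[R]_n).

Definition subsp (T : set 'rV[R]_n) :=
  [/\ T 0, (forall x y, T x -> T y -> T (x + y)) & (forall a x, T x -> T (a *: x))].

Variables (T : set 'rV[R]_n) (P : 'rV[R]_n -> 'rV[R]_n).
Hypotheses (sT : subsp T) (hP : is_proj T P).

Lemma proj_orth x y : T y -> dot (x - P x) y = 0.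
Proof.
case: sT => T0 TD TZ Ty.
have [Px Hmin] := hP x.
set r := x - P x; set d := dot r y; set q := dot y y.
have key0 : forall t, dot r r <= dot (r - t *: y) (r - t *: y).
  move=> t; have := Hmin _ (TD _ _ Px (TZ t _ Ty)).
  rewrite !enormE ler_sqrt ?dot_ge0 // -/r.
  by have -> : x - (P x + t *: y) = r - t *: y by rewrite /r opprD addrA.
clearbody r.
have key : forall t, 2 * t * d <= t ^+ 2 * q.
  move=> t; have := key0 t.
  rewrite dotBl !dotBr !dotZl !dotZr (dotC y r) -/d -/q; lra.
have q0 : 0 <= q by exact: dot_ge0.
have q1 : 0 < q + 1 by lra.
set s := (q + 1)^-1.
have s0 : 0 < s by rewrite invr_gt0.
have hs : s * (q + 1) = 1 by rewrite mulVf // gt_eqF.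
have := key (d * s) => k.
have h1 : d * d * (s * (1 + s)) <= 0 by nra.
have h2 : 0 < s * (1 + s) by nra.
have h3 : d * d <= 0.
  nra.
by apply/eqP; rewrite -sqrf_eq0 expr2 eq_le h3 -expr2 sqr_ge0.
Qed.


Lemma projT x : T (P x).
Proof. by case: (hP x). Qed.

Lemma proj_uniq x z : T z -> (forall y, T y -> dot (x - z) y = 0) -> P x = z.
Proof.
case: sT => T0 TD TZ Tz Hz.
have Td : T (P x - z) by rewrite -scaleN1r; apply: TD (projT x) (TZ _ _ Tz).
have e : P x - z = (x - z) - (x - P x).
  by rewrite opprB [RHS]addrC addrA subrK.
have : dot (P x - z) (P x - z) = 0.
  by rewrite {1}e dotBl Hz // proj_orth // subrr.
by move/dot_eq0/eqP; rewrite subr_eq0 => /eqP.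
Qed.

Lemma proj_fix u : T u -> P u = u.
Proof. by move=> Tu; apply: proj_uniq => // y _; rewrite subrr dot0l. Qed.

Lemma projD x y : P (x + y) = P x + P y.
Proof.
case: (sT) => T0 TD TZ.
apply: proj_uniq; first exact: TD (projT x) (projT y).
move=> w Tw; rewrite opprD addrACA dotDl !proj_orth //; exact: addr0.
Qed.

Lemma projZ a x : P (a *: x) = a *: P x.
Proof.
case: (sT) => T0 TD TZ.
apply: proj_uniq; first exact: TZ (projT x).
by move=> w Tw; rewrite -scalerBr dotZl proj_orth // mulr0.
Qed.

Lemma relax_norm a x :
  dot (relax a P x) (relax a P x) = dot x x - a * (2 - a) * dot (x - P x) (x - P x).
Proof.
have e : relax a P x = x - a *: (x - P x).
  by rewrite /relax scalerBr scalerBl scale1r addrAC -addrA -opprB -scalerBr.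
have o : dot (x - P x) (P x) = 0 by apply: proj_orth; apply: projT.
have e2 : dot x (x - P x) = dot (x - P x) (x - P x).
  by rewrite [in RHS]dotBl (dotC (P x)) o subr0.
rewrite e; move: e2; move: (x - P x) => r e2.
rewrite dotBl !dotBr !dotZl !dotZr (dotC r x) e2; ring.
Qed.

End Proj.
Section Relax.
Variables (R : realType) (n : nat).
Variables (T : set 'rV[R]_n) (P : 'rV[R]_n -> 'rV[R]_n).
Hypotheses (sT : subsp T) (hP : is_proj T P).
Implicit Types (x y u : 'rV[R]_n).

Lemma relaxE a x : relax a P x = x - a *: (x - P x).
Proof. by rewrite /relax scalerBr scalerBl scale1r addrAC -addrA -opprB -scalerBr. Qed.

Lemma relax_shift a x u : T u -> relax a P (x + u) = relax a P x + u.
Proof.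
by move=> Tu; rewrite /relax (projD sT hP) (proj_fix sT hP Tu) !scalerDr addrACA -scalerDl subrK scale1r.
Qed.

Lemma relaxD a x y : relax a P (x + y) = relax a P x + relax a P y.
Proof. by rewrite /relax (projD sT hP) !scalerDr addrACA. Qed.

Lemma relaxZ a c x : relax a P (c *: x) = c *: relax a P x.
Proof. by rewrite /relax (projZ sT hP) !scalerA scalerDr !scalerA (mulrC a) (mulrC (1 - a)). Qed.

Lemma relax_id a x : P x = x -> relax a P x = x.
Proof. by move=> e; rewrite relaxE e subrr scaler0 subr0. Qed.

Lemma relax_eq a x : a != 0 -> relax a P x = x -> P x = x.
Proof.
move=> a0; rewrite relaxE => /eqP; rewrite subr_eq addrC -subr_eq subrr eq_sym.
by rewrite scaler_eq0 (negbTE a0) /= subr_eq0 => /eqP.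
Qed.

End Relax.

Lemma dot_convex (R : realType) n (al : R) (x y : 'rV[R]_n) :
  dot (al *: y + (1 - al) *: x) (al *: y + (1 - al) *: x) =
  al * dot y y + (1 - al) * dot x x - al * (1 - al) * dot (y - x) (y - x).
Proof.
rewrite !dotDl !dotDr ?dotBl ?dotBr !dotNl !dotNr !dotZl !dotZr (dotC x y); ring.
Qed.

Lemma sum_cont (R : realType) n (I : finType) (F : I -> 'rV[R]_n -> R) :
  (forall i, continuous (F i)) -> continuous (fun v => \sum_i F i v).
Proof.
move=> hF; apply: (@continuous_big R^o I +%R 0 xpredT _ _ _ F) => // .
exact: (@pseudometric_normed_Zmodule.add_continuous R R^o).
Qed.

Lemma enorm_mx_cont (R : realType) n (C : 'M[R]_n) :
  continuous (fun v : 'rV[R]_n => enorm (v *m C)).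
Proof.
have hc : forall j, continuous (fun v : 'rV[R]_n => (v *m C) ord0 j).
  move=> j.
  have -> : (fun v : 'rV[R]_n => (v *m C) ord0 j) =
            (fun v => \sum_i (v ord0 i * C i j)).
    by apply: funext => v; rewrite mxE.
  apply: sum_cont => i v.
  apply: (@continuousM R _ (fun v : 'rV[R]_n => v ord0 i) (fun=> C i j)).
    exact: coord_continuous.
  exact: cst_continuous.
have hs : continuous (fun v : 'rV[R]_n => \sum_j ((v *m C) ord0 j) ^+ 2).
  apply: sum_cont => j v.
  exact: (@continuousM R _ (fun v : 'rV[R]_n => (v *m C) ord0 j) (fun v => (v *m C) ord0 j) v (hc j v) (hc j v)).
move=> v; apply: (continuous_comp (hs v)).
exact: sqrt_continuous.
Qed.

Lemma prod0 (R : realType) (c d : R) : 0 < c -> c * d = 0 -> d = 0.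
Proof. by move=> c0 /eqP; rewrite mulf_eq0 (gt_eqF c0) /= => /eqP. Qed.

Lemma dot_sub0 (R : realType) n (x y : 'rV[R]_n) : dot (x - y) (x - y) = 0 -> y = x.
Proof. by move/dot_eq0/eqP; rewrite subr_eq0 => /eqP ->. Qed.

Section Main.
Variables (R : realType) (n : nat).
Variables (TM TN : set 'rV[R]_n) (PM PN PI : 'rV[R]_n -> 'rV[R]_n) (al a1 a2 : R).
Hypotheses (sM : subsp TM) (sN : subsp TN) (hM : is_proj TM PM) (hN : is_proj TN PN).
Hypotheses (sI : subsp (TM `&` TN)) (hI : is_proj (TM `&` TN) PI).
Hypotheses (hal : 0 < al <= 1) (ha1 : 0 < a1 <= 2) (ha2 : 0 < a2 <= 2).
Hypothesis hB : (a1 < 2 /\ a2 < 2) \/ (al < 1 /\ (a1 != 2 \/ a2 != 2)).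

Definition Sop v := al *: relax a2 PM (relax a1 PN v) + (1 - al) *: v.

Lemma S_dec w : (forall z, TM z -> TN z -> dot w z = 0) ->
  dot (Sop w) (Sop w) <= dot w w /\ (dot (Sop w) (Sop w) = dot w w -> w = 0).
Proof.
move=> orth.
have Hw : TM w -> TN w -> w = 0 by move=> ? ?; apply: dot_eq0; apply: orth.
have E1 := relax_norm sN hN a1 w.
move Ey1 : (relax a1 PN w) E1 => y1 E1.
have E2 := relax_norm sM hM a2 y1.
move Ey2 : (relax a2 PM y1) E2 => y2 E2.
have E : dot (Sop w) (Sop w) = al * dot y2 y2 + (1 - al) * dot w w
   - al * (1 - al) * dot (y2 - w) (y2 - w) by rewrite /Sop Ey1 Ey2 dot_convex.
have d1 := dot_ge0 (w - PN w); have d2 := dot_ge0 (y1 - PM y1).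
have d3 := dot_ge0 (y2 - w).
case/andP: hal => al0 al1; case/andP: ha1 => a10 a11; case/andP: ha2 => a20 a21.
have t1 : 0 <= al * (a1 * (2 - a1)) * dot (w - PN w) (w - PN w).
  by apply: mulr_ge0 => //; apply: mulr_ge0; [lra|apply: mulr_ge0; lra].
have t2 : 0 <= al * (a2 * (2 - a2)) * dot (y1 - PM y1) (y1 - PM y1).
  by apply: mulr_ge0 => //; apply: mulr_ge0; [lra|apply: mulr_ge0; lra].
have t3 : 0 <= al * (1 - al) * dot (y2 - w) (y2 - w).
  by apply: mulr_ge0 => //; apply: mulr_ge0; lra.
have EE : dot (Sop w) (Sop w) = dot w w
   - al * (a1 * (2 - a1)) * dot (w - PN w) (w - PN w)
   - al * (a2 * (2 - a2)) * dot (y1 - PM y1) (y1 - PM y1)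
   - al * (1 - al) * dot (y2 - w) (y2 - w).
  by rewrite E E2 E1; ring.
split; first by rewrite EE; lra.
rewrite EE => Heq.
have z1 : al * (a1 * (2 - a1)) * dot (w - PN w) (w - PN w) = 0 by lra.
have z2 : al * (a2 * (2 - a2)) * dot (y1 - PM y1) (y1 - PM y1) = 0 by lra.
have z3 : al * (1 - al) * dot (y2 - w) (y2 - w) = 0 by lra.
have inM : PM w = w -> TM w.
  by move=> e; rewrite -e; exact: (projT hM w).
have inN : PN w = w -> TN w.
  by move=> e; rewrite -e; exact: (projT hN w).
have a1lt : a1 != 2 -> a1 < 2 by move=> h; rewrite lt_neqAle h a11.
have a2lt : a2 != 2 -> a2 < 2 by move=> h; rewrite lt_neqAle h a21.
have D1 : a1 < 2 -> PN w = w.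
  move=> h; apply: dot_sub0; apply: prod0 z1.
  by apply: mulr_gt0 => //; apply: mulr_gt0; lra.
have D2 : a2 < 2 -> PM y1 = y1.
  move=> h; apply: dot_sub0; apply: prod0 z2.
  by apply: mulr_gt0 => //; apply: mulr_gt0; lra.
have D3 : al < 1 -> y2 = w.
  move=> h; apply/esym/dot_sub0; apply: prod0 z3.
  by apply: mulr_gt0; lra.
case: hB => [[h1 h2]|[h0 [h1|h2]]].
- have e1 := D1 h1; have y1w : y1 = w by rewrite -Ey1 relax_id.
  have e2 := D2 h2; rewrite y1w in e2.
  exact: Hw (inM e2) (inN e1).
- have e1 := D1 (a1lt h1); have y1w : y1 = w by rewrite -Ey1 relax_id.
  have e3 := D3 h0; rewrite -Ey2 y1w in e3.
  have e2 := relax_eq (lt0r_neq0 a20) e3.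
  exact: Hw (inM e2) (inN e1).
- have e2 := D2 (a2lt h2); have y2y1 : y2 = y1 by rewrite -Ey2 relax_id.
  have e3 := D3 h0; rewrite y2y1 in e3; rewrite e3 in e2.
  rewrite e3 in Ey1; have e1 := relax_eq (lt0r_neq0 a10) Ey1.
  exact: Hw (inM e2) (inN e1).
Qed.


Definition Aop v := Sop v - PI v.

Lemma A_lt v : dot v v <= 1 -> dot (Aop v) (Aop v) < 1.
Proof.
move=> hv.
have [uM uN] := projT hI v.
have orth : forall z, TM z -> TN z -> dot (v - PI v) z = 0.
  by move=> z zM zN; apply: (proj_orth sI hI); split.
move: orth uM uN; rewrite /Aop; move Eu : (PI v) => u.
move Ew : (v - u) => w orth uM uN.
have ev : v = w + u by rewrite -Ew subrK.
have Sv : Sop v = Sop w + u.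
  rewrite ev /Sop (relax_shift sN hN _ _ uN) (relax_shift sM hM _ _ uM).
  rewrite !scalerDr addrACA -scalerDl (addrC al) subrK scale1r //.
rewrite Sv addrK.
have dv : dot v v = dot w w + dot u u.
  by rewrite {1 2}ev dotDl !dotDr (dotC u w) (orth u uM uN); ring.
have [le eq] := S_dec orth.
have u0 := dot_ge0 u.
case: (eqVneq (dot (Sop w) (Sop w)) (dot w w)) => h.
  by rewrite h (eq h) dot0l ltr01.
have : dot (Sop w) (Sop w) < dot w w by rewrite lt_neqAle h le.
lra.
Qed.

Lemma SD x y : Sop (x + y) = Sop x + Sop y.
Proof.
rewrite /Sop (relaxD sN hN) (relaxD sM hM) !scalerDr.
by rewrite addrACA.
Qed.

Lemma SZ c x : Sop (c *: x) = c *: Sop x.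
Proof.
by rewrite /Sop (relaxZ sN hN) (relaxZ sM hM) [RHS]scalerDr !scalerA (mulrC c al) (mulrC c (1 - al)).
Qed.

Lemma AD x y : Aop (x + y) = Aop x + Aop y.
Proof. by rewrite /Aop SD (projD sI hI) opprD addrACA. Qed.

Lemma AZ c x : Aop (c *: x) = c *: Aop x.
Proof. by rewrite /Aop SZ (projZ sI hI) scalerBr. Qed.

Lemma A0 : Aop 0 = 0.
Proof. by have := AZ 0 0; rewrite !scale0r. Qed.

Lemma A_mx : exists C : 'M[R]_n, forall v, Aop v = v *m C.
Proof.
exists (\matrix_(i, j) (Aop (delta_mx 0 i)) ord0 j) => v.
rewrite {1}(row_sum_delta v).
rewrite (big_morph Aop AD A0).
apply/rowP => j; rewrite summxE !mxE; apply: eq_bigr => i _.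
by rewrite AZ !mxE.
Qed.

End Main.

Lemma tangent_subsp (R : realType) n k (M : set 'rV[R]_n) x T :
  tangent_at k M x T -> subsp T.
Proof.
case=> U [m [F [_ ->]]]; split => /=.
- exact: linear0.
- by move=> y z hy hz; rewrite linearD hy hz addr0.
- by move=> a y hy; rewrite linearZ_LR hy scaler0.
Qed.

Lemma subspI (R : realType) n (A B : set 'rV[R]_n) : subsp A -> subsp B -> subsp (A `&` B).
Proof.
case=> A0 AD AZ [B0 BD BZ]; split.
- by split.
- by move=> x y [? ?] [? ?]; split; [apply: AD|apply: BD].
- by move=> a x [? ?]; split; [apply: AZ|apply: BZ].
Qed.

Lemma ball_compact (R : realType) n : compact [set v : 'rV[R]_n | enorm v <= 1].
Proof.
apply: (@subclosed_compact _ _ [set v : 'rV[R]_n | forall i, `[(-1 : R), 1]%classic (v ord0 i)]).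
- have -> : [set v : 'rV[R]_n | enorm v <= 1] = (@enorm R n) @^-1` [set r : R | r <= 1] by [].
  apply: (proj1 (continuous_closedP _)); last exact: closed_le.
  have := @enorm_mx_cont R n 1%:M.
  by under eq_fun do rewrite mulmx1.
- exact: (@rV_compact _ n (fun=> `[(-1 : R), 1]%classic) (fun _ => @segment_compact R (-1) 1)).
move=> v /= hv i.
have h : v ord0 i ^+ 2 <= 1.
  have s1 : \sum_(j < n) v ord0 j ^+ 2 <= 1.
    move: hv; rewrite /enorm -{1}sqrtr1 ler_sqrt //.
  apply: le_trans s1; rewrite (bigD1 i) //= lerDl.
  by apply: sumr_ge0 => j _; exact: sqr_ge0.
rewrite /= in_itv /=; apply/andP; split; nra.
Qed.



Unset Implicit Arguments.

Theorem lemma6 (R : realType) (n k : nat) (alpha alpha1 alpha2 : R)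
  (M N : set 'rV[R]_n) (xbar : 'rV[R]_n)
  (TM TN TMN : set 'rV[R]_n) (PM PN PI : 'rV[R]_n -> 'rV[R]_n) :
  (2 <= k)%N ->
  0 < alpha <= 1 -> 0 < alpha1 <= 2 -> 0 < alpha2 <= 2 ->
  ((alpha1 < 2 /\ alpha2 < 2) \/ (alpha < 1 /\ (alpha1 != 2 \/ alpha2 != 2))) ->
  M xbar -> N xbar ->
  tangent_at k M xbar TM -> tangent_at k N xbar TN ->
  tangent_at k (M `&` N) xbar TMN ->
  TMN = TM `&` TN ->
  is_proj TM PM -> is_proj TN PN -> is_proj (TM `&` TN) PI ->
  opnorm (fun v => (alpha *: relax alpha2 PM (relax alpha1 PN v)
                    + (1 - alpha) *: v) - PI v) < 1.
Proof.
move=> _ hal ha1 ha2 hB _ _ tM tN _ _ hM hN hI.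
have sM := tangent_subsp tM; have sN := tangent_subsp tN.
have sI := subspI sM sN.
set A := Aop PM PN PI alpha alpha1 alpha2.
have [C hC] : exists C : 'M[R]_n, forall v, A v = v *m C.
  exact: (A_mx alpha alpha1 alpha2 sM sN hM hN sI hI).
have Alt : forall v, enorm v <= 1 -> enorm (A v) < 1.
  move=> v hv.
  have hv' : dot v v <= 1 by move: hv; rewrite enormE -{1}sqrtr1 ler_sqrt.
  rewrite enormE -sqrtr1 ltr_sqrt //.
  exact: (A_lt sM sN hM hN sI hI hal ha1 ha2 hB hv').
have cont : continuous (fun v => enorm (A v)).
  have -> : (fun v => enorm (A v)) = (fun v => enorm (v *m C)).
    by apply: funext => v; rewrite hC.
  exact: enorm_mx_cont.
have K0 : [set v : 'rV[R]_n | enorm v <= 1] !=set0.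
  exists 0; rewrite /= enormE dot0l sqrtr0; exact: ler01.
have [c Kc hc] := @EVT_max_rV R n (fun v => enorm (A v)) _ K0 (@ball_compact R n)
  (continuous_subspaceT cont).
rewrite inE /= in Kc.
rewrite /opnorm; apply: (le_lt_trans _ (Alt c Kc)).
apply: ge_sup.
  by exists (enorm (A 0)); exists 0 => //=; rewrite enormE dot0l sqrtr0; exact: ler01.
move=> y [v Kv <-]; apply: (hc v); rewrite inE; exact: Kv.
Qed.
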